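(* Assume (A1) and let $i,j\in I_N$. For every $(y,x)\in J_j^*\times J_i^*$ there exists a unique $\tau=T(y,x)\in(0,1)$ such that $\mathcal{D}_{\mathrm{implicit}}^{ji}(y,x)=\mathcal{E}_1(\tau,y)+\mathcal{E}_2(\tau,x)$. Moreover, $\mathcal{D}_{\mathrm{implicit}}^{ji}$ is differentiable there with $$\partial_{x_i}\mathcal{D}_{\mathrm{implicit}}^{ji}(y,x)=L_i'\Big(\frac{x_i}{1-T(y,x)}\Big),\qquad \partial_{y_j}\mathcal{D}_{\mathrm{implicit}}^{ji}(y,x)=-L_j'\Big(-\frac{y_j}{T(y,x)}\Big).$$
   Context: Junction: fix an integer $N\ge1$ and $N$ distinct unit vectors $e_1,\dots,e_N\in\mathbb{R}^2$. Set $J_i=[0,\infty)e_i$, $J_i^*=J_i\setminus\{0\}$, $J=\bigcup_iJ_i$, $I_N=\{1,\dots,N\}$. Each $x\in J_i$ is written $x=x_ie_i$, $x_i\ge0$. For a function $f$ on $J\times J$ (variables $(y,x)$), $f^{ji}$ denotes its restriction to $J_j\times J_i$, viewed as a function of $(y_j,x_i)$. (A1): there is $\gamma>0$ with $L_i\in C^2(\mathbb{R})$, $L_i''\ge\gamma$ for each $i$. $L_0(0)=\min_jL_j(0)$. For $\tau\in[0,1]$: $\mathcal{E}_1(\tau,y)=\tau L_j(-y_j/\tau)-\tau L_0(0)$ if $y=y_je_j\ne0$, $\tau\ne0$; $\mathcal{E}_1(\tau,0)=0$; $\mathcal{E}_1(0,y)=+\infty$ if $y\ne0$. $\mathcal{E}_2(\tau,x)=(1-\tau)L_i(x_i/(1-\tau))+\tau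 L_0(0)$ if $x=x_ie_i\ne0$, $\tau\ne1$; $\mathcal{E}_2(\tau,0)=L_0(0)$; $\mathcal{E}_2(1,x)=+\infty$ if $x\ne0$. $\mathcal{D}_{\mathrm{implicit}}(y,x)=\inf_{0\le\tau\le1}\{\mathcal{E}_1(\tau,y)+\mathcal{E}_2(\tau,x)\}$. *)

(* Defs.v *)
From Stdlib Require Import Reals Lra ClassicalEpsilon.
Open Scope R_scope.

(* Extended values: None stands for +infinity. *)
Definition ER := option R.
Definition ERadd (a b : ER) : ER :=
  match a, b with Some u, Some v => Some (u + v) | _, _ => None end.

Definition is_glb (E : R -> Prop) (m : R) : Prop :=
  (forall v, E v -> m <= v) /\ (forall b, (forall v, E v -> b <= v) -> b <= m).
Definition Rinf (E : R -> Prop) : R := epsilon (inhabits 0) (is_glb E).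

(* L0(0) = min_{1<=j<=N} L_j(0)  (the branches are indexed by 1..N). *)
Fixpoint Lmin0 (L : nat -> R -> R) (n : nat) : R :=
  match n with
  | O => 0
  | S O => L 1%nat 0
  | S m => Rmin (Lmin0 L m) (L n 0)
  end.

(* E1(tau, y) for y = yj e_j (yj >= 0), in the coordinate yj. *)
Definition Ecost1 (L : nat -> R -> R) (N j : nat) (tau yj : R) : ER :=
  if Req_dec_T yj 0 then Some 0
  else if Req_dec_T tau 0 then None
  else Some (tau * L j (- yj / tau) - tau * Lmin0 L N).

(* E2(tau, x) for x = xi e_i (xi >= 0), in the coordinate xi. *)
Definition Ecost2 (L : nat -> R -> R) (N i : nat) (tau xi : R) : ER :=
  if Req_dec_T xi 0 then Some (Lmin0 L N)
  else if Req_dec_T tau 1 then None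
  else Some ((1 - tau) * L i (xi / (1 - tau)) + tau * Lmin0 L N).

(* D_implicit^{ji}(yj, xi) = inf_{0<=tau<=1} (E1 + E2); the infimum is taken
   over the finite values (the value +infinity never lowers an infimum). *)
Definition Dimp (L : nat -> R -> R) (N j i : nat) (yj xi : R) : R :=
  Rinf (fun v => exists tau, 0 <= tau <= 1 /\
                 ERadd (Ecost1 L N j tau yj) (Ecost2 L N i tau xi) = Some v).

Definition differentiable2_at (f : R -> R -> R) (y x a b : R) : Prop :=
  forall eps, 0 < eps -> exists delta, 0 < delta /\
    forall h k, sqrt (h * h + k * k) < delta ->
      Rabs (f (y + h) (x + k) - f y x - a * h - b * k)
        <= eps * sqrt (h * h + k * k).

(* Main.v *)
Require Import Defs.
From Stdlib Require Import Reals Lra Psatz ClassicalEpsilon.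
Open Scope R_scope.
From Stdlib Require Import Reals.

Lemma dpl_ext (f g : R -> R) x l l' :
  (forall t, f t = g t) -> l = l' -> derivable_pt_lim f x l -> derivable_pt_lim g x l'.
Proof.
  intros E El H eps He. destruct (H eps He) as [d Hd]. exists d.
  intros h Hh1 Hh2. rewrite <- !E, <- El. apply Hd; auto.
Qed.

Lemma dL_mono (dL d2L : R -> R) g :
  (forall z, derivable_pt_lim dL z (d2L z)) -> (forall z, g <= d2L z) ->
  forall a b, a <= b -> dL b - dL a >= g * (b - a).
Proof.
  intros Hd Hg a b Hab. destruct (Req_dec a b) as [->|Hne].
  { lra. }
  destruct (MVT_cor2 (fun w => dL w - g * w) (fun w => d2L w - g) a b) as [c [Hc1 Hc2]].
  { lra. }
  { intros c _. eapply dpl_ext; [| | apply derivable_pt_lim_minus;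
      [apply Hd | apply derivable_pt_lim_scal; apply derivable_pt_lim_id]].
    - intro t. unfold minus_fct, mult_real_fct, id. reflexivity.
    - ring. }
  specialize (Hg c). nra.
Qed.

Lemma strong (L dL d2L : R -> R) g :
  (forall z, derivable_pt_lim L z (dL z)) ->
  (forall z, derivable_pt_lim dL z (d2L z)) -> (forall z, g <= d2L z) ->
  forall u w, L w >= L u + dL u * (w - u) + g / 2 * ((w - u) * (w - u)).
Proof.
  intros H1 H2 Hg u w.
  set (phi := fun z => L z - L u - dL u * (z - u) - g / 2 * ((z - u) * (z - u))).
  assert (Hphi : forall c, derivable_pt_lim phi c (dL c - dL u - g * (c - u))).
  { intro c. unfold phi.
    eapply dpl_ext; [| | apply derivable_pt_lim_minus;
      [apply derivable_pt_lim_minus;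
        [apply derivable_pt_lim_minus; [apply H1 | apply derivable_pt_lim_const]
        | apply derivable_pt_lim_scal; apply derivable_pt_lim_minus;
            [apply derivable_pt_lim_id | apply derivable_pt_lim_const]]
      | apply derivable_pt_lim_scal; apply derivable_pt_lim_mult;
         apply derivable_pt_lim_minus; [apply derivable_pt_lim_id | apply derivable_pt_lim_const
            | apply derivable_pt_lim_id | apply derivable_pt_lim_const]]].
    - intro t. unfold minus_fct, mult_real_fct, mult_fct, id, fct_cte. reflexivity.
    - unfold minus_fct, mult_real_fct, mult_fct, id, fct_cte. field. }
  assert (phi w >= 0).
  { destruct (Req_dec w u) as [->|Hne].
    - unfold phi. lra.
    - destruct (Rlt_or_le u w) as [Hlt|Hle].
      + destruct (MVT_cor2 phi _ u w Hlt (fun c _ => Hphi c)) as [c [E Hc]].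
        assert (dL c - dL u >= g * (c - u)) by (apply (dL_mono dL d2L); auto; lra).
        assert (phi u = 0) by (unfold phi; ring). nra.
      + assert (Hlt : w < u) by lra.
        destruct (MVT_cor2 phi _ w u Hlt (fun c _ => Hphi c)) as [c [E Hc]].
        assert (dL u - dL c >= g * (u - c)) by (apply (dL_mono dL d2L); auto; lra).
        assert (phi u = 0) by (unfold phi; ring). nra. }
  unfold phi in H. lra.
Qed.

Lemma persp (L dL : R -> R) g s s' v v' :
  0 < s' -> L v' >= L v + dL v * (v' - v) + g / 2 * ((v' - v) * (v' - v)) ->
  s' * L v' >= s * L v + dL v * (s' * v' - s * v) + (L v - v * dL v) * (s' - s)
     + s' * (g / 2 * ((v' - v) * (v' - v))).
Proof. intros Hs H. nra. Qed.

Lemma deriv_G (L dL : R -> R) a b k t :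
  (forall z, derivable_pt_lim L z (dL z)) -> a * t + b <> 0 ->
  derivable_pt_lim (fun t => (a * t + b) * L (k / (a * t + b))) t
    (a * (L (k / (a * t + b)) - k / (a * t + b) * dL (k / (a * t + b)))).
Proof.
  intros HL Hne.
  assert (Haff : derivable_pt_lim (fun t => a * t + b) t a).
  { eapply dpl_ext; [| | apply derivable_pt_lim_plus;
      [apply derivable_pt_lim_scal; apply derivable_pt_lim_id | apply derivable_pt_lim_const]].
    - intro. unfold plus_fct, mult_real_fct, id, fct_cte. reflexivity.
    - ring. }
  assert (Hq : derivable_pt_lim (fun t => k / (a * t + b)) t (- k * a / ((a*t+b)*(a*t+b)))).
  { eapply dpl_ext; [| | apply derivable_pt_lim_div; [apply derivable_pt_lim_const | apply Haff | exact Hne]].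
    - intro. unfold div_fct, fct_cte. reflexivity.
    - unfold fct_cte, Rsqr. field. auto. }
  eapply dpl_ext; [| | apply derivable_pt_lim_mult; [apply Haff | apply derivable_pt_lim_comp; [apply Hq | apply HL]]].
  - intro. unfold mult_fct, comp. reflexivity.
  - unfold mult_fct, comp. field. auto.
Qed.

Lemma glb_unique E m1 m2 : is_glb E m1 -> is_glb E m2 -> m1 = m2.
Proof. intros [A B] [C D]. apply Rle_antisym; auto. Qed.

Lemma Rinf_spec E m : is_glb E m -> Rinf E = m.
Proof.
  intro H. unfold Rinf. apply glb_unique with E; auto.
  apply epsilon_spec. eauto.
Qed.

Lemma glb_exists E v0 lb : E v0 -> (forall v, E v -> lb <= v) -> exists m, is_glb E m.
Proof.
  intros H0 Hlb.
  destruct (completeness (fun z => E (- z))) as [m [Hm1 Hm2]].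
  { exists (- lb). intros z Hz. specialize (Hlb _ Hz). lra. }
  { exists (- v0). rewrite Ropp_involutive. auto. }
  exists (- m). split.
  - intros v Hv. assert (- v <= m) by (apply Hm1; rewrite Ropp_involutive; auto). lra.
  - intros b Hb. assert (m <= - b). { apply Hm2. intros z Hz. specialize (Hb _ Hz). lra. } lra.
Qed.

Lemma lin_approx f u l : derivable_pt_lim f u l ->
  forall eps, 0 < eps -> exists delta, 0 < delta /\
    forall d, Rabs d < delta -> Rabs (f (u + d) - f u - l * d) <= eps * Rabs d.
Proof.
  intros H eps He. destruct (H eps He) as [[d Hd0] Hd]. exists d. split; auto.
  intros h Hh. destruct (Req_dec h 0) as [->|Hne].
  - rewrite Rplus_0_r, Rabs_R0. replace (f u - f u - l * 0) with 0 by ring. rewrite Rabs_R0. lra.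
  - specialize (Hd h Hne Hh). simpl in Hd.
    replace (f (u + h) - f u - l * h) with (((f (u + h) - f u) / h - l) * h) by (field; auto).
    rewrite Rabs_mult. apply Rmult_le_compat_r. apply Rabs_pos. lra.
Qed.

Lemma abs_le_norm h k : Rabs h <= sqrt (h * h + k * k).
Proof.
  rewrite <- sqrt_Rsqr_abs. apply sqrt_le_1_alt. unfold Rsqr. nra.
Qed.

Definition FF (Lj Li : R -> R) (y x t : R) := t * Lj (- y / t) + (1 - t) * Li (x / (1 - t)).

Lemma KI Lj dLj d2Lj Li dLi d2Li g :
  (forall z, derivable_pt_lim Lj z (dLj z)) -> (forall z, derivable_pt_lim dLj z (d2Lj z)) ->
  (forall z, g <= d2Lj z) ->
  (forall z, derivable_pt_lim Li z (dLi z)) -> (forall z, derivable_pt_lim dLi z (d2Li z)) ->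
  (forall z, g <= d2Li z) -> 0 <= g ->
  forall y x y' x' t t', 0 < t < 1 -> 0 < t' < 1 ->
  FF Lj Li y' x' t' >= FF Lj Li y x t + (- dLj (- y / t)) * (y' - y) + dLi (x / (1 - t)) * (x' - x)
    + ((Lj (- y / t) - (- y / t) * dLj (- y / t)) - (Li (x / (1 - t)) - x / (1 - t) * dLi (x / (1 - t)))) * (t' - t)
    + t' * (g / 2 * ((- y' / t' - - y / t) * (- y' / t' - - y / t))).
Proof.
  intros H1 H2 H3 H4 H5 H6 Hg y x y' x' t t' Ht Ht'.
  pose proof (persp Lj dLj g t t' (- y / t) (- y' / t') ltac:(lra)
     (strong Lj dLj d2Lj g H1 H2 H3 _ _)) as P1.
  pose proof (persp Li dLi g (1 - t) (1 - t') (x / (1 - t)) (x' / (1 - t')) ltac:(lra)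
     (strong Li dLi d2Li g H4 H5 H6 _ _)) as P2.
  replace (t' * (- y' / t')) with (- y') in P1 by (field; lra).
  replace (t * (- y / t)) with (- y) in P1 by (field; lra).
  replace ((1 - t') * (x' / (1 - t'))) with x' in P2 by (field; lra).
  replace ((1 - t) * (x / (1 - t))) with x in P2 by (field; lra).
  assert (0 <= (1 - t') * (g / 2 * ((x' / (1 - t') - x / (1 - t)) * (x' / (1 - t') - x / (1 - t))))).
  { apply Rmult_le_pos; [lra|]. apply Rmult_le_pos; [lra|]. apply Rle_0_sqr. }
  unfold FF. lra.
Qed.

Lemma coer Lj dLj d2Lj Li dLi d2Li g :
  (forall z, derivable_pt_lim Lj z (dLj z)) -> (forall z, derivable_pt_lim dLj z (d2Lj z)) ->
  (forall z, g <= d2Lj z) ->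
  (forall z, derivable_pt_lim Li z (dLi z)) -> (forall z, derivable_pt_lim dLi z (d2Li z)) ->
  (forall z, g <= d2Li z) -> 0 <= g ->
  forall y x t, 0 < y -> 0 < x -> 0 < t < 1 ->
  let K := Rabs (Lj 0) + Rabs (dLj 0) * y + Rabs (Li 0) + Rabs (dLi 0) * x in
  t * (FF Lj Li y x t + K) >= g / 2 * (y * y) /\ (1 - t) * (FF Lj Li y x t + K) >= g / 2 * (x * x).
Proof.
  intros H1 H2 H3 H4 H5 H6 Hg y x t Hy Hx Ht K.
  pose proof (strong Lj dLj d2Lj g H1 H2 H3 0 (- y / t)) as S1.
  pose proof (strong Li dLi d2Li g H4 H5 H6 0 (x / (1 - t))) as S2.
  set (w := - y / t) in *. set (z := x / (1 - t)) in *.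
  assert (Ew : t * w = - y) by (unfold w; field; lra).
  assert (Ez : (1 - t) * z = x) by (unfold z; field; lra).
  rewrite Rminus_0_r in S1, S2.
  assert (A1 : t * Lj w >= t * Lj 0 + dLj 0 * (t * w) + g / 2 * (t * (w * w))) by nra.
  assert (A2 : (1 - t) * Li z >= (1 - t) * Li 0 + dLi 0 * ((1 - t) * z) + g / 2 * ((1 - t) * (z * z))) by nra.
  rewrite Ew in A1. rewrite Ez in A2.
  assert (B1 : t * Lj 0 >= - Rabs (Lj 0)).
  { pose proof (Rle_abs (Lj 0)). pose proof (Rle_abs (- Lj 0)). rewrite Rabs_Ropp in *. nra. }
  assert (B2 : (1 - t) * Li 0 >= - Rabs (Li 0)).
  { pose proof (Rle_abs (Li 0)). pose proof (Rle_abs (- Li 0)). rewrite Rabs_Ropp in *. nra. }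
  assert (B3 : dLj 0 * (- y) >= - (Rabs (dLj 0) * y)).
  { pose proof (Rle_abs (dLj 0)). nra. }
  assert (B4 : dLi 0 * x >= - (Rabs (dLi 0) * x)).
  { pose proof (Rle_abs (- dLi 0)). rewrite Rabs_Ropp in *. nra. }
  assert (Q1 : 0 <= g / 2 * (t * (w * w))).
  { apply Rmult_le_pos; [lra|]. apply Rmult_le_pos; [lra|]. apply Rle_0_sqr. }
  assert (Q2 : 0 <= g / 2 * ((1 - t) * (z * z))).
  { apply Rmult_le_pos; [lra|]. apply Rmult_le_pos; [lra|]. apply Rle_0_sqr. }
  assert (C : FF Lj Li y x t + K >= g / 2 * (t * (w * w)) + g / 2 * ((1 - t) * (z * z))).
  { unfold FF, K. fold w z. lra. }
  split.
  - assert (E : t * (g / 2 * (t * (w * w))) = g / 2 * (y * y)).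
    { replace y with (- (t * w)) by lra. ring. }
    nra.
  - assert (E : (1 - t) * (g / 2 * ((1 - t) * (z * z))) = g / 2 * (x * x)).
    { rewrite <- Ez. ring. }
    nra.
Qed.

Lemma dF Lj dLj Li dLi y x t :
  (forall z, derivable_pt_lim Lj z (dLj z)) -> (forall z, derivable_pt_lim Li z (dLi z)) ->
  0 < t < 1 ->
  derivable_pt_lim (FF Lj Li y x) t
   ((Lj (- y / t) - (- y / t) * dLj (- y / t)) - (Li (x / (1 - t)) - x / (1 - t) * dLi (x / (1 - t)))).
Proof.
  intros H1 H2 Ht.
  pose proof (deriv_G Lj dLj 1 0 (- y) t H1 ltac:(lra)) as G1.
  pose proof (deriv_G Li dLi (-1) 1 x t H2 ltac:(lra)) as G2.
  eapply dpl_ext; [| | apply derivable_pt_lim_plus; [apply G1 | apply G2]].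
  - intro s. unfold plus_fct, FF.
    replace (1 * s + 0) with s by ring. replace (-1 * s + 1) with (1 - s) by ring. reflexivity.
  - replace (1 * t + 0) with t by ring. replace (-1 * t + 1) with (1 - t) by ring. ring.
Qed.

Lemma local_min_deriv f T c : derivable_pt_lim f T c -> 0 < T < 1 ->
  (forall t, 0 < t < 1 -> f T <= f t) -> c = 0.
Proof.
  intros H HT Hmin. destruct (Req_dec c 0) as [|Hc]; auto. exfalso.
  destruct (H (Rabs c) (Rabs_pos_lt _ Hc)) as [[d Hd0] Hd]. simpl in Hd.
  destruct (Rlt_or_le 0 c) as [Hpos|Hneg].
  - set (h := - Rmin (d / 2) (T / 2)).
    assert (Hm1 : Rmin (d/2) (T/2) <= d/2) by apply Rmin_l.
    assert (Hm2 : Rmin (d/2) (T/2) <= T/2) by apply Rmin_r.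
    assert (Hm3 : 0 < Rmin (d/2) (T/2)) by (apply Rmin_glb_lt; lra).
    assert (Hh : h <> 0) by (unfold h; lra).
    assert (Hha : Rabs h < d) by (unfold h; rewrite Rabs_Ropp, Rabs_pos_eq; lra).
    specialize (Hd h Hh Hha). rewrite (Rabs_pos_eq c) in Hd; [|lra].
    pose proof (Hmin (T + h) ltac:(unfold h; split; lra)).
    assert (Hq : 0 < (f (T + h) - f T) / h).
    { apply Rabs_def2 in Hd. lra. }
    assert (Hn : (f (T + h) - f T) / h <= 0).
    { unfold Rdiv. replace ((f (T + h) - f T) * / h) with ((f (T + h) - f T) * (- / - h)) by (field; auto).
      assert (0 < / - h) by (apply Rinv_0_lt_compat; unfold h; lra). nra. }
    lra.
  - assert (Hneg' : c < 0) by lra.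
    set (h := Rmin (d / 2) ((1 - T) / 2)).
    assert (Hm1 : Rmin (d/2) ((1-T)/2) <= d/2) by apply Rmin_l.
    assert (Hm2 : Rmin (d/2) ((1-T)/2) <= (1-T)/2) by apply Rmin_r.
    assert (Hm3 : 0 < Rmin (d/2) ((1-T)/2)) by (apply Rmin_glb_lt; lra).
    assert (Hh : h <> 0) by (unfold h; lra).
    assert (Hha : Rabs h < d) by (unfold h; rewrite Rabs_pos_eq; lra).
    specialize (Hd h Hh Hha). rewrite (Rabs_left c) in Hd; [|lra].
    pose proof (Hmin (T + h) ltac:(unfold h; split; lra)).
    assert (Hq : (f (T + h) - f T) / h < 0).
    { apply Rabs_def2 in Hd. lra. }
    assert (Hn : 0 <= (f (T + h) - f T) / h).
    { unfold Rdiv. assert (0 < / h) by (apply Rinv_0_lt_compat; unfold h; lra). nra. }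
    lra.
Qed.

Lemma minex Lj dLj d2Lj Li dLi d2Li g :
  (forall z, derivable_pt_lim Lj z (dLj z)) -> (forall z, derivable_pt_lim dLj z (d2Lj z)) ->
  (forall z, g <= d2Lj z) ->
  (forall z, derivable_pt_lim Li z (dLi z)) -> (forall z, derivable_pt_lim dLi z (d2Li z)) ->
  (forall z, g <= d2Li z) -> 0 < g ->
  forall y x, 0 < y -> 0 < x ->
  exists T, 0 < T < 1 /\ (forall t, 0 < t < 1 -> FF Lj Li y x T <= FF Lj Li y x t) /\
   (Lj (- y / T) - (- y / T) * dLj (- y / T)) - (Li (x / (1 - T)) - x / (1 - T) * dLi (x / (1 - T))) = 0.
Proof.
  intros H1 H2 H3 H4 H5 H6 Hg y x Hy Hx.
  pose proof (coer Lj dLj d2Lj Li dLi d2Li g H1 H2 H3 H4 H5 H6 ltac:(lra) y x) as C.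
  set (K := Rabs (Lj 0) + Rabs (dLj 0) * y + Rabs (Li 0) + Rabs (dLi 0) * x) in C.
  cbv zeta in C. fold K in C.
  set (M := FF Lj Li y x (1/2)).
  assert (HK : 0 <= K).
  { unfold K. pose proof (Rabs_pos (Lj 0)). pose proof (Rabs_pos (dLj 0)).
    pose proof (Rabs_pos (Li 0)). pose proof (Rabs_pos (dLi 0)). nra. }
  set (A := Rabs M + K + 1).
  assert (HA : 0 < A) by (unfold A; pose proof (Rabs_pos M); lra).
  assert (HMA : M + K < A) by (unfold A; pose proof (Rle_abs M); lra).
  set (a0 := Rmin (1/4) (g / 2 * (y * y) / A)).
  set (e1 := Rmin (1/4) (g / 2 * (x * x) / A)).
  assert (Ha0 : 0 < a0 <= 1/4).
  { unfold a0. split. apply Rmin_glb_lt; [lra|]. apply Rdiv_lt_0_compat; [apply Rmult_lt_0_compat; [lra|nra]|lra]. apply Rmin_l. }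
  assert (He1 : 0 < e1 <= 1/4).
  { unfold e1. split. apply Rmin_glb_lt; [lra|]. apply Rdiv_lt_0_compat; [apply Rmult_lt_0_compat; [lra|nra]|lra]. apply Rmin_l. }
  assert (Ha0A : a0 * A <= g / 2 * (y * y)).
  { assert (a0 <= g / 2 * (y * y) / A) by apply Rmin_r.
    apply Rmult_le_compat_r with (r := A) in H; [|lra].
    replace (g / 2 * (y * y) / A * A) with (g / 2 * (y * y)) in H by (field; lra). lra. }
  assert (He1A : e1 * A <= g / 2 * (x * x)).
  { assert (e1 <= g / 2 * (x * x) / A) by apply Rmin_r.
    apply Rmult_le_compat_r with (r := A) in H; [|lra].
    replace (g / 2 * (x * x) / A * A) with (g / 2 * (x * x)) in H by (field; lra). lra. }
  assert (Low : forall t, 0 < t <= a0 -> M < FF Lj Li y x t).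
  { intros t Ht. destruct (Rlt_or_le M (FF Lj Li y x t)) as [|Hle]; auto. exfalso.
    destruct (C t Hy Hx ltac:(split; lra)) as [C1 _]. nra. }
  assert (High : forall t, 1 - e1 <= t < 1 -> M < FF Lj Li y x t).
  { intros t Ht. destruct (Rlt_or_le M (FF Lj Li y x t)) as [|Hle]; auto. exfalso.
    destruct (C t Hy Hx ltac:(split; lra)) as [_ C2]. nra. }
  destruct (continuity_ab_min (FF Lj Li y x) a0 (1 - e1) ltac:(lra)) as [T [HTmin HT]].
  { intros c Hc. apply derivable_continuous_pt. eexists.
    apply (dF Lj dLj Li dLi y x c H1 H4). lra. }
  assert (HT1 : 0 < T < 1) by (split; lra).
  assert (Hmin : forall t, 0 < t < 1 -> FF Lj Li y x T <= FF Lj Li y x t).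
  { intros t Ht. pose proof (HTmin (1/2) ltac:(split; lra)). fold M in H.
    destruct (Rle_or_lt t a0). pose proof (Low t ltac:(split; lra)). lra.
    destruct (Rle_or_lt (1 - e1) t). pose proof (High t ltac:(split; lra)). lra.
    apply HTmin. lra. }
  exists T. split; [auto|split; [auto|]].
  eapply local_min_deriv; [apply (dF Lj dLj Li dLi y x T H1 H4 HT1) | auto | auto].
Qed.

Lemma sumF L N j i y x t : 0 < y -> 0 < x -> 0 < t < 1 ->
  ERadd (Ecost1 L N j t y) (Ecost2 L N i t x) = Some (FF (L j) (L i) y x t).
Proof.
  intros Hy Hx Ht. unfold Ecost1, Ecost2.
  destruct (Req_dec_T y 0); [lra|]. destruct (Req_dec_T t 0); [lra|].
  destruct (Req_dec_T x 0); [lra|]. destruct (Req_dec_T t 1); [lra|].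
  simpl. f_equal. unfold FF. ring.
Qed.

Lemma setchar L N j i y x v : 0 < y -> 0 < x ->
  ((exists tau, 0 <= tau <= 1 /\ ERadd (Ecost1 L N j tau y) (Ecost2 L N i tau x) = Some v) <->
   exists t, 0 < t < 1 /\ v = FF (L j) (L i) y x t).
Proof.
  intros Hy Hx. split.
  - intros [tau [Ht E]].
    unfold Ecost1, Ecost2 in E.
    destruct (Req_dec_T y 0); [lra|]. destruct (Req_dec_T tau 0); [simpl in E; discriminate|].
    destruct (Req_dec_T x 0); [lra|]. destruct (Req_dec_T tau 1); [simpl in E; discriminate|].
    exists tau. split; [split; lra|]. simpl in E. injection E as E. rewrite <- E. unfold FF. ring.
  - intros [t [Ht ->]]. exists t. split; [split; lra|]. apply sumF; auto.
Qed.

Theorem mainTheorem19 :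
  forall (N : nat) (L dL d2L : nat -> R -> R) (gamma : R),
    (1 <= N)%nat ->
    0 < gamma ->
    (forall k, (1 <= k <= N)%nat -> forall z,
        derivable_pt_lim (L k) z (dL k z) /\
        derivable_pt_lim (dL k) z (d2L k z) /\
        continuity_pt (d2L k) z /\
        gamma <= d2L k z) ->
    forall i j : nat, (1 <= i <= N)%nat -> (1 <= j <= N)%nat ->
    forall yj xi : R, 0 < yj -> 0 < xi ->
    exists T : R,
      (0 < T < 1 /\
       ERadd (Ecost1 L N j T yj) (Ecost2 L N i T xi) = Some (Dimp L N j i yj xi) /\
       (forall T', 0 < T' < 1 ->
          ERadd (Ecost1 L N j T' yj) (Ecost2 L N i T' xi) = Some (Dimp L N j i yj xi) ->
          T' = T)) /\
      differentiable2_at (Dimp L N j i) yj xi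
        (- dL j (- yj / T)) (dL i (xi / (1 - T))).
Proof.
  intros N L dL d2L g HN Hg HL i j Hi Hj y x Hy Hx.
  assert (H1 : forall z, derivable_pt_lim (L j) z (dL j z)) by (intro z; apply (HL j Hj z)).
  assert (H2 : forall z, derivable_pt_lim (dL j) z (d2L j z)) by (intro z; apply (HL j Hj z)).
  assert (H3 : forall z, g <= d2L j z) by (intro z; apply (HL j Hj z)).
  assert (H4 : forall z, derivable_pt_lim (L i) z (dL i z)) by (intro z; apply (HL i Hi z)).
  assert (H5 : forall z, derivable_pt_lim (dL i) z (d2L i z)) by (intro z; apply (HL i Hi z)).
  assert (H6 : forall z, g <= d2L i z) by (intro z; apply (HL i Hi z)).
  pose proof (KI _ _ _ _ _ _ g H1 H2 H3 H4 H5 H6 ltac:(lra)) as Ki.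
  destruct (minex _ _ _ _ _ _ g H1 H2 H3 H4 H5 H6 Hg y x Hy Hx) as [T [HT [Hmin Hc]]].
  set (F := FF (L j) (L i)) in *.
  assert (Dval : Dimp L N j i y x = F y x T).
  { unfold Dimp. apply Rinf_spec. split.
    - intros v Hv. apply (setchar L N j i y x v Hy Hx) in Hv.
      destruct Hv as [t [Ht ->]]. apply Hmin; auto.
    - intros b Hb. apply Hb. apply (setchar L N j i y x _ Hy Hx). exists T; auto. }
  exists T. split; [split; [auto|split]|].
  - rewrite Dval. apply sumF; auto.
  - intros T' HT' E. rewrite sumF in E by auto. rewrite Dval in E. injection E as E. fold F in E.
    pose proof (Ki y x y x T T' HT HT') as K. fold F in K. rewrite Hc in K.
    rewrite E in K.
    assert (Q : (- y / T' - - y / T) * (- y / T' - - y / T) <= 0).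
    { assert (0 < T' * (g/2)) by (apply Rmult_lt_0_compat; lra). nra. }
    assert (Q2 : - y / T' - - y / T = 0).
    { pose proof (Rle_0_sqr (- y / T' - - y / T)). unfold Rsqr in H.
      apply Rsqr_0_uniq. unfold Rsqr. lra. }
    assert (Q3 : y / T' = y / T) by lra.
    apply (f_equal Rinv) in Q3. rewrite !Rinv_div in Q3.
    assert (T' = T' / y * y) by (field; lra). assert (T = T / y * y) by (field; lra).
    rewrite H, H0, Q3. reflexivity.
  - intros eps Heps.
    set (u := - y / T). set (v := x / (1 - T)).
    destruct (lin_approx (L j) u (dL j u) (H1 u) (eps / 2) ltac:(lra)) as [d1 [Hd1 A1]].
    destruct (lin_approx (L i) v (dL i v) (H4 v) (eps / 2) ltac:(lra)) as [d2 [Hd2 A2]].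
    exists (Rmin (Rmin y x) (Rmin (d1 * T) (d2 * (1 - T)))). split.
    { apply Rmin_glb_lt; apply Rmin_glb_lt; try lra; apply Rmult_lt_0_compat; lra. }
    intros h k Hn.
    pose proof (abs_le_norm h k) as Nh.
    pose proof (abs_le_norm k h) as Nk. rewrite (Rplus_comm (k*k)) in Nk.
    set (n := sqrt (h * h + k * k)) in *.
    assert (M1 := Rmin_l (Rmin y x) (Rmin (d1 * T) (d2 * (1 - T)))).
    assert (M2 := Rmin_r (Rmin y x) (Rmin (d1 * T) (d2 * (1 - T)))).
    assert (M3 := Rmin_l y x). assert (M4 := Rmin_r y x).
    assert (M5 := Rmin_l (d1 * T) (d2 * (1 - T))). assert (M6 := Rmin_r (d1 * T) (d2 * (1 - T))).
    pose proof (Rle_abs h). pose proof (Rle_abs (-h)). pose proof (Rle_abs k). pose proof (Rle_abs (-k)).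
    rewrite Rabs_Ropp in *.
    assert (Hyh : 0 < y + h) by lra. assert (Hxk : 0 < x + k) by lra.
    set (lb := F y x T + - dL j u * h + dL i v * k).
    assert (Hlb : forall w, (exists tau, 0 <= tau <= 1 /\
        ERadd (Ecost1 L N j tau (y + h)) (Ecost2 L N i tau (x + k)) = Some w) -> lb <= w).
    { intros w Hw. apply (setchar L N j i _ _ w Hyh Hxk) in Hw.
      destruct Hw as [t [Ht ->]].
      pose proof (Ki y x (y + h) (x + k) T t HT Ht) as K. fold F in K. rewrite Hc in K. fold u v in K.
      assert (0 <= t * (g / 2 * ((- (y + h) / t - u) * (- (y + h) / t - u)))).
      { apply Rmult_le_pos; [lra|]. apply Rmult_le_pos; [lra|]. apply Rle_0_sqr. }
      unfold lb. replace (y + h - y) with h in K by ring. replace (x + k - x) with k in K by ring. fold F. lra. }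
    assert (Hin : exists tau, 0 <= tau <= 1 /\
        ERadd (Ecost1 L N j tau (y + h)) (Ecost2 L N i tau (x + k)) = Some (F (y + h) (x + k) T)).
    { apply (setchar L N j i _ _ _ Hyh Hxk). exists T; auto. }
    destruct (glb_exists _ _ _ Hin Hlb) as [m Hm].
    assert (Dm : Dimp L N j i (y + h) (x + k) = m) by (unfold Dimp; apply Rinf_spec; exact Hm).
    rewrite Dm, Dval.
    destruct Hm as [Hm1 Hm2].
    assert (Lo : lb <= m) by (apply Hm2; exact Hlb).
    assert (Up : m <= F (y + h) (x + k) T) by (apply Hm1; exact Hin).
    assert (Habs1 : Rabs (- h / T) < d1).
    { unfold Rdiv. rewrite Rabs_mult, Rabs_Ropp, Rabs_inv, (Rabs_pos_eq T) by lra.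
      apply Rmult_lt_reg_r with T; [lra|]. rewrite Rmult_assoc, Rinv_l, Rmult_1_r by lra. lra. }
    assert (Habs2 : Rabs (k / (1 - T)) < d2).
    { unfold Rdiv. rewrite Rabs_mult, Rabs_inv, (Rabs_pos_eq (1 - T)) by lra.
      apply Rmult_lt_reg_r with (1 - T); [lra|]. rewrite Rmult_assoc, Rinv_l, Rmult_1_r by lra. lra. }
    specialize (A1 _ Habs1). specialize (A2 _ Habs2).
    assert (E1 : Rabs (- h / T) = Rabs h / T).
    { unfold Rdiv. rewrite Rabs_mult, Rabs_Ropp, Rabs_inv, (Rabs_pos_eq T) by lra. reflexivity. }
    assert (E2 : Rabs (k / (1 - T)) = Rabs k / (1 - T)).
    { unfold Rdiv. rewrite Rabs_mult, Rabs_inv, (Rabs_pos_eq (1 - T)) by lra. reflexivity. }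
    rewrite E1 in A1. rewrite E2 in A2.
    assert (Eu : - (y + h) / T = u + - h / T) by (unfold u; field; lra).
    assert (Ev : (x + k) / (1 - T) = v + k / (1 - T)) by (unfold v; field; lra).
    set (r1 := L j (u + - h / T) - L j u - dL j u * (- h / T)) in *.
    set (r2 := L i (v + k / (1 - T)) - L i v - dL i v * (k / (1 - T))) in *.
    assert (ER : F (y + h) (x + k) T - F y x T - - dL j u * h - dL i v * k = T * r1 + (1 - T) * r2).
    { unfold F, FF, r1, r2. rewrite Eu, Ev. fold u v. field. lra. }
    assert (B1 : T * r1 <= eps / 2 * Rabs h).
    { pose proof (Rle_abs r1). assert (HB1 : T * r1 <= T * (eps / 2 * (Rabs h / T))) by (apply Rmult_le_compat_l; lra).
      replace (T * (eps / 2 * (Rabs h / T))) with (eps / 2 * Rabs h) in HB1 by (field; lra). lra. }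
    assert (B2 : (1 - T) * r2 <= eps / 2 * Rabs k).
    { pose proof (Rle_abs r2). assert (HB2 : (1 - T) * r2 <= (1 - T) * (eps / 2 * (Rabs k / (1 - T)))) by (apply Rmult_le_compat_l; lra).
      replace ((1 - T) * (eps / 2 * (Rabs k / (1 - T)))) with (eps / 2 * Rabs k) in HB2 by (field; lra). lra. }
    apply Rabs_le. unfold lb in Lo.
    assert (0 <= n) by (unfold n; apply sqrt_pos).
    split; nra.
Qed.
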